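(* Let $g:(0,\infty)\to(0,\infty)$ decrease monotonically to zero, let $k\in\mathbb N$ with $k\ge2$, and let $\mathfrak N=\{e\in\mathfrak E_d: 0\in e\}$. If there exist $\epsilon>0$ and $n^*\in\mathbb N$ such that $\Lambda_g(n)/\log\log n\ge k+\epsilon$ for all $n\ge n^*$, then for every $A\in\{A_{1,k},\dots,A_{k,k}\}$ $$\mathbb P\Big[\limsup_{n\to\infty}\bigcap_{z\in B_n\cap A}J_{g(n)}(\mathfrak N\circ\tau_z)\Big]=0,$$ i.e., $\mathbb P$-a.s. for $n$ large enough there is a site $z_n\in B_n\cap A$ all of whose incident edges have conductance $\le g(n)$. Consequently, $\mathbb P$-a.s. for $n$ large enough there exist $k$ distinct sites $z_{(1,n)},\dots,z_{(k,n)}\in B_n$ with $\pi_{z_{(i,n)}}\le 2d\,g(n)$ for all $i\le k$.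
   Context: Let $d\ge2$, $\mathfrak E_d$ the nearest-neighbour edges of $\mathbb Z^d$, $x\sim y$ if $|x-y|_1=1$. Conductances $(w_e)_{e\in\mathfrak E_d}$ are i.i.d. $(0,\infty)$-valued with law $\mathbb P$; $w$ a generic copy. $B_n=[-n,n]^d\cap\mathbb Z^d$, $\pi_x=\sum_{y\sim x}w_{xy}$, $\Lambda_g(u)=u^d\,\mathbb P[w\le g(u)]^{2d}$. $J_\alpha(\mathfrak A)=\{\exists e\in\mathfrak A: w_e>\alpha\}$; $\mathfrak A\circ\tau_z=\{\{x+z,y+z\}:\{x,y\}\in\mathfrak A\}$. For $1\le i\le k$, $A_{i,k}=\{z\in\mathbb Z^d: z_1+\dots+z_d\equiv i \bmod k\}$. $\limsup_n E_n=\bigcap_n\bigcup_{k\ge n}E_k$. *)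

(* Defs.v *)
From HB Require Import structures.
From mathcomp Require Import all_boot all_order all_algebra.
From mathcomp Require Import all_classical all_reals all_analysis.
Set Implicit Arguments. Unset Strict Implicit. Unset Printing Implicit Defensive.
Import Order.TTheory GRing.Theory Num.Theory.
Local Open Scope classical_set_scope.
Local Open Scope ring_scope.

Definition site (d : nat) := {ffun 'I_d -> int}.

(* Nearest-neighbour edges of Z^d: the pair (x, i) encodes the edge
   {x, x + e_i}; this is a bijective parametrization of E_d. *)
Definition edge (d : nat) := (site d * 'I_d)%type.

Definition shiftp (d : nat) (x : site d) (i : 'I_d) (s : int) : site d :=
  [ffun j => x j + (if j == i then s else 0)].

Definition endpoint (d : nat) (z : site d) (e : edge d) : Prop :=
  z = e.1 \/ z = shiftp e.1 e.2 1.

Definition box (d n : nat) : set (site d) :=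
  [set z | forall j, `|z j| <= n%:Z].

Definition Aset (d i k : nat) : set (site d) :=
  [set z | (\sum_j z j == i%:Z %[mod k%:Z])%Z].

Definition limsup_ev (T : Type) (E : nat -> set T) : set T :=
  \bigcap_n \bigcup_(m in [set m | (n <= m)%N]) E m.

Definition J_at (R : realType) (T : Type) (d : nat) (w : edge d -> T -> R)
    (alpha : R) (z : site d) : set T :=
  [set om | exists e : edge d, endpoint z e /\ alpha < w e om].

(* pi_z = sum of conductances of the 2d edges incident to z:
   edges (z,i) = {z, z+e_i} and (z - e_i, i) = {z - e_i, z} *)
Definition pi_at (R : realType) (T : Type) (d : nat) (w : edge d -> T -> R)
    (z : site d) (om : T) : R :=
  \sum_(i < d) (w (z, i) om + w (shiftp z i (-1), i) om).

Definition mutually_independent (R : realType) (dT : measure_display)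
    (T : measurableType dT) (P : probability T R) (I : eqType)
    (X : I -> T -> R) : Prop :=
  forall (s : seq I) (B : I -> set R),
    uniq s -> (forall i, measurable (B i)) ->
    P (\bigcap_(i in [set i | i \in s]) (X i @^-1` B i)) =
    (\prod_(i <- s) P (X i @^-1` B i))%E.

(* Lambda_g(u) = u^d * P[w <= g(u)]^(2d), with mu the law of w *)
Definition Lambda (R : realType) (mu : probability R R) (g : R -> R)
    (d : nat) (u : R) : R :=
  u ^+ d * (fine (mu `]-oo, g u]%classic)) ^+ (2 * d).
Arguments box : clear implicits.
Arguments Aset : clear implicits.

(* Main.v *)
Require Import Defs.
From HB Require Import structures.
From mathcomp Require Import all_boot all_order all_algebra.
From mathcomp Require Import all_classical all_reals all_analysis.
From mathcomp Require Import zify ring lra.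
Import Order.TTheory GRing.Theory Num.Theory.
Local Open Scope classical_set_scope.
Local Open Scope ring_scope.
Set Implicit Arguments. Unset Strict Implicit. Unset Printing Implicit Defensive.

Section Gen.
Context (R : realType) (dT : measure_display) (T : measurableType dT)
  (P : probability T R).

Definition pr (A : set T) : R := fine (P A).

Lemma prE A : measurable A -> P A = (pr A)%:E.
Proof. by move=> mA; rewrite /pr fineK //; exact: fin_num_measure. Qed.

Lemma pr_ge0 A : 0 <= pr A.
Proof. by rewrite /pr fine_ge0 // measure_ge0. Qed.

Lemma prD A B : measurable A -> measurable B ->
  pr (A `&` ~` B) = pr A - pr (A `&` B).
Proof.
move=> mA mB; rewrite -setDE /pr measureD //; last first.
  exact: (le_lt_trans (probability_le1 P mA) (ltry 1)).
by rewrite fineB ?fin_num_measure //; exact: measurableI.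
Qed.

Lemma cbigcup_meas (U : countType) (D : set U) (F : U -> set T) :
  (forall i, D i -> measurable (F i)) -> measurable (\bigcup_(i in D) F i).
Proof.
move=> mF; rewrite bigcup_mkcond; apply: countable_bigcupT_measurable.
  exact: countableP.
move=> i; case: ifPn => [/set_mem Di|_]; [exact: mF|exact: measurable0].
Qed.

Lemma cbigcap_meas (U : countType) (D : set U) (F : U -> set T) :
  (forall i, D i -> measurable (F i)) -> measurable (\bigcap_(i in D) F i).
Proof.
move=> mF; rewrite -[X in measurable X]setCK setC_bigcap; apply: measurableC.
by apply: cbigcup_meas => i Di; apply/measurableC/mF.
Qed.

End Gen.

Section Sites.
Variable d : nat.

Lemma shiftp_comp (z : site d) i a b :
  shiftp (shiftp z i a) i b = shiftp z i (a + b).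
Proof. by apply/ffunP => j; rewrite !ffunE; case: (j == i); rewrite ?addr0 // addrA. Qed.

Lemma shiftp0 (z : site d) i : shiftp z i 0 = z.
Proof. by apply/ffunP => j; rewrite !ffunE; case: (j == i); rewrite addr0. Qed.

Definition Nz (z : site d) : seq (edge d) :=
  [seq (z, i) | i <- ord_enum d] ++ [seq (shiftp z i (-1), i) | i <- ord_enum d].

Lemma Nz_endpoint z e : (e \in Nz z) <-> endpoint z e.
Proof.
case: e => x i; rewrite mem_cat; split.
- case/orP => /mapP [j _ [-> ->]]; [by left | right].
  by rewrite /= shiftp_comp addNr shiftp0.
- case => [/= ->| /= ->]; apply/orP; [left|right]; apply/mapP; exists i;
    rewrite ?mem_ord_enum //.
  by rewrite shiftp_comp addrN shiftp0.
Qed.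

Lemma Nz_uniq z : uniq (Nz z).
Proof.
have inj1 : injective (fun i : 'I_d => (z, i)) by move=> i j [].
have inj2 : injective (fun i : 'I_d => (shiftp z i (-1), i)) by move=> i j [].
rewrite cat_uniq (map_inj_uniq inj1) (map_inj_uniq inj2) ord_enum_uniq /= andbT.
apply/hasPn => e /mapP [i _ ->]; apply/negP => /mapP [j _ [E ij]].
move/ffunP: E => /(_ i); rewrite ffunE eqxx => /eqP.
by rewrite -subr_eq0 addrAC subrr add0r oppr_eq0 oner_eq0.
Qed.

Lemma size_Nz z : size (Nz z) = (2 * d)%N.
Proof. by rewrite size_cat !size_map -(size_map val) val_ord_enum size_iota addnn mul2n. Qed.

Lemma sum_shiftp (x : site d) i s :
  \sum_j (shiftp x i s) j = \sum_j x j + s.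
Proof.
under eq_bigr => j _ do rewrite ffunE.
rewrite big_split /=; congr (_ + _).
rewrite (bigD1 i) //= eqxx big1 ?addr0 // => j /negbTE -> //.
Qed.

Lemma far i k (z z' : site d) e : (1 < k)%N -> Aset d i k z -> Aset d i k z' ->
  z != z' -> endpoint z e -> endpoint z' e -> False.
Proof.
move=> k1 Az Az' nz.
have key : forall x j, Aset d i k x -> Aset d i k (shiftp x j 1) -> False.
  move=> x j /eqP h1 /eqP; rewrite sum_shiftp => h2.
  have : (k%:Z %| (\sum_j0 x j0 + 1) - \sum_j0 x j0)%Z.
    by rewrite -eqz_mod_dvd h2 h1.
  rewrite addrC addKr dvdz1 absz_nat => /eqP hk; by rewrite hk in k1.
case: e => x j [] /= ez [] /= ez'; subst.
- by rewrite eqxx in nz.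
- exact: (key x j).
- exact: (key x j).
- by rewrite eqxx in nz.
Qed.

End Sites.

Section Indep.
Context (R : realType) (d : nat) (dT : measure_display) (T : measurableType dT)
  (P : probability T R) (mu : probability R R) (w : edge d -> T -> R)
  (hw_meas : forall e, measurable_fun setT (w e))
  (hw_law : forall e B, measurable B -> P (w e @^-1` B) = mu B)
  (hw_indep : mutually_independent P w).

Lemma meas_pre e B : measurable B -> measurable (w e @^-1` B).
Proof. by move=> mB; rewrite -[X in measurable X]setTI; exact: hw_meas. Qed.

Definition Cset (L : seq (edge d)) (B : edge d -> set R) : set T :=
  \bigcap_(e in [set e | e \in L]) (w e @^-1` B e).

Lemma Cset_meas L B : (forall e, measurable (B e)) -> measurable (Cset L B).
Proof. by move=> mB; apply: cbigcap_meas => e _; exact: meas_pre. Qed.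

Definition qa (a : R) : R := fine (mu `]-oo, a]%classic).

Lemma qa_ge0 a : 0 <= qa a.
Proof. by rewrite /qa fine_ge0 // measure_ge0. Qed.

Lemma qa_le1 a : qa a <= 1.
Proof.
have m : measurable (`]-oo, a]%classic : set R) by exact: measurable_itv.
by rewrite /qa -lee_fin fineK ?fin_num_measure //; exact: probability_le1.
Qed.

Lemma pr_Cset L B : uniq L -> (forall e, measurable (B e)) ->
  pr P (Cset L B) = \prod_(e <- L) fine (mu (B e)).
Proof.
move=> uL mB; rewrite /pr /Cset hw_indep //.
rewrite (eq_bigr (fun e => (fine (mu (B e)))%:E)); last first.
  by move=> e _; rewrite hw_law // fineK // fin_num_measure.
by rewrite prodEFin.
Qed.

Definition Dz a z := Cset (Nz z) (fun _ => `]-oo, a]%classic).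

Lemma J_Dz a z : J_at w a z = ~` Dz a z.
Proof.
apply/seteqP; split => om /=.
- move=> [e [ez lt]] HD; have := HD e (proj2 (Nz_endpoint _ _) ez).
  rewrite /= in_itv /= => le; by rewrite leNgt lt in le.
- move=> nD; apply: contrapT => nJ; apply: nD => e /= ez.
  rewrite /= in_itv /= leNgt; apply/negP => lt; apply: nJ; exists e; split => //.
  exact/Nz_endpoint.
Qed.

Definition Xset a (S : seq (site d)) : set T :=
  \bigcap_(z in [set z | z \in S]) J_at w a z.

Lemma J_meas a z : measurable (J_at w a z).
Proof. by rewrite J_Dz; apply/measurableC/Cset_meas => _; exact: measurable_itv. Qed.

Lemma Xset_meas a S : measurable (Xset a S).
Proof. by apply: cbigcap_meas => z _; exact: J_meas. Qed.

Lemma prod_cst (s : seq (edge d)) (c : R) : \prod_(e <- s) c = c ^+ size s.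
Proof. by elim: s => [|x s IH]; rewrite ?big_nil ?expr0 // big_cons IH exprS. Qed.

Lemma indep_main a (S : seq (site d)) : forall L B, uniq S -> uniq L ->
  (forall e, measurable (B e)) ->
  (forall z, z \in S -> forall e, e \in L -> ~ endpoint z e) ->
  (forall z z', z \in S -> z' \in S -> z != z' -> forall e,
      endpoint z e -> ~ endpoint z' e) ->
  pr P (Cset L B `&` Xset a S) = pr P (Cset L B) * (1 - qa a ^+ (2 * d)) ^+ size S.
Proof.
elim: S => [|z S IH] L B uS uL mB hL hS.
  have -> : Xset a [::] = setT.
    by apply/seteqP; split => // om _ z; rewrite /= in_nil.
  by rewrite setIT expr0 mulr1.
pose B' := fun e => if e \in Nz z then `]-oo, a]%classic else B e.
have mB' : forall e, measurable (B' e).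
  by move=> e; rewrite /B'; case: ifP => _; [exact: measurable_itv|exact: mB].
move: uS; rewrite cons_uniq => /andP [zS uS'].
have hzL : forall e, e \in L -> e \notin Nz z.
  move=> e eL; apply/negP => /Nz_endpoint; apply: hL eL; exact: mem_head.
have CC : Cset (L ++ Nz z) B' = Cset L B `&` Dz a z.
  apply/seteqP; split => om /=.
  - move=> H; split => e /= eL.
    + have := H e; rewrite /= mem_cat eL /= => /(_ isT).
      by rewrite /B' (negbTE (hzL e eL)).
    + have := H e; rewrite /= mem_cat eL orbT => /(_ isT).
      by rewrite /B' eL.
  - move=> [H1 H2] e /=; rewrite mem_cat => /orP [eL|eN]; rewrite /B'.
    + rewrite (negbTE (hzL e eL)); exact: H1.
    + rewrite eN; exact: H2.
have uL' : uniq (L ++ Nz z).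
  rewrite cat_uniq uL Nz_uniq andbT /=; apply/hasPn => e eN; apply/negP => eL.
  by move: (hzL e eL); rewrite eN.
have hL' : forall z', z' \in S -> forall e, e \in L ++ Nz z -> ~ endpoint z' e.
  move=> z' z'S e; rewrite mem_cat => /orP [eL|eN].
  + by apply: hL => //; rewrite in_cons z'S orbT.
  + apply: (hS z z'); [exact: mem_head|by rewrite in_cons z'S orbT| |].
    * by apply/eqP => E; subst; rewrite z'S in zS.
    * exact/Nz_endpoint.
have hS' : forall z1 z2, z1 \in S -> z2 \in S -> z1 != z2 -> forall e,
      endpoint z1 e -> ~ endpoint z2 e.
  by move=> z1 z2 z1S z2S; apply: hS; rewrite in_cons ?z1S ?z2S orbT.
have hLS : forall z', z' \in S -> forall e, e \in L -> ~ endpoint z' e.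
  by move=> z' z'S; apply: hL; rewrite in_cons z'S orbT.
have XS : Xset a (z :: S) = J_at w a z `&` Xset a S.
  apply/seteqP; split => om /=.
  + move=> H; split; first by apply: H; exact: mem_head.
    by move=> z' z'S; apply: H; rewrite /= in_cons z'S orbT.
  + move=> [Hz HS] z'; rewrite /= in_cons => /orP [/eqP ->|z'S] //; exact: HS.
rewrite XS J_Dz.
have -> : Cset L B `&` (~` Dz a z `&` Xset a S) =
          (Cset L B `&` Xset a S) `&` ~` Dz a z by rewrite setIA setIAC.
rewrite prD; last 2 first.
- by apply: measurableI; [exact: Cset_meas|exact: Xset_meas].
- by apply: Cset_meas => _; exact: measurable_itv.
have -> : Cset L B `&` Xset a S `&` Dz a z = Cset (L ++ Nz z) B' `&` Xset a S.
  by rewrite CC setIAC.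
rewrite (IH L B) // (IH (L ++ Nz z) B') //.
rewrite (pr_Cset uL' mB') big_cat /= (pr_Cset uL mB).
have -> : \prod_(e <- Nz z) fine (mu (B' e)) = qa a ^+ (2 * d).
  rewrite (eq_big_seq (fun _ => qa a)); last by move=> e eN; rewrite /B' eN.
  by rewrite prod_cst size_Nz.
have -> : \prod_(i <- L) fine (mu (B' i)) = \prod_(e <- L) fine (mu (B e)).
  by apply: eq_big_seq => e eL; rewrite /B' (negbTE (hzL e eL)).
rewrite exprS; ring.
Qed.

Lemma pr_Xset a S : uniq S ->
  (forall z z', z \in S -> z' \in S -> z != z' -> forall e,
      endpoint z e -> ~ endpoint z' e) ->
  pr P (Xset a S) = (1 - qa a ^+ (2 * d)) ^+ size S.
Proof.
move=> uS hS.
have := @indep_main a S [::] (fun _ => setT) uS isT (fun _ => measurableT)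
  (fun _ _ _ => ltac:(by [])) hS.
have -> : Cset [::] (fun _ => setT) = setT.
  by apply/seteqP; split => // om _ e.
by rewrite setTI /pr probability_setT mul1r.
Qed.

End Indep.

Lemma exists_S (d k i M : nat) : (0 < d)%N -> (0 < k)%N ->
  exists S : seq (site d), [/\ uniq S,
    (forall z, z \in S -> box d M z /\ Aset d i k z) &
    size S = ((2 * M + 1) %/ k * (2 * M + 1) ^ (d - 1))%N].
Proof.
case: d => [//|d'] _ kpos.
set m := (2 * M + 1)%N; set L := (m %/ k)%N.
pose s (y : {ffun 'I_d' -> 'I_m}) : int :=
  - M%:Z + \sum_(j < d') ((y j)%:Z - M%:Z).
pose c y : int := ((i%:Z - s y) %% k%:Z)%Z.
pose phi (p : 'I_L * {ffun 'I_d' -> 'I_m}) : site d'.+1 :=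
  [ffun j => match unlift ord0 j with
             | None => (k * p.1)%:Z + c p.2 - M%:Z
             | Some j' => (p.2 j')%:Z - M%:Z end].
have phi0 p : phi p ord0 = (k * p.1)%:Z + c p.2 - M%:Z.
  by rewrite ffunE unlift_none.
have phiS p j' : phi p (lift ord0 j') = (p.2 j')%:Z - M%:Z.
  by rewrite ffunE liftK.
have c_ge0 y : 0 <= c y by rewrite modz_ge0 // eqz_nat -lt0n.
have c_lt y : c y < k%:Z by rewrite ltz_pmod // ltz_nat.
have phi_inj : injective phi.
  move=> [t y] [t' y'] E.
  have yy : y = y'.
    apply/ffunP => j'; apply/val_inj; have := phiS (t, y) j'.
    rewrite E phiS /= => /addIr [] //.
  subst y'; congr (_, _); apply/val_inj => /=.
  have := phi0 (t, y); rewrite E phi0 /= => /addIr /addIr [] /eqP.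
  by rewrite eqn_mul2l (negbTE (lt0n_neq0 kpos)) /= => /eqP.
exists (map phi (enum {: 'I_L * {ffun 'I_d' -> 'I_m}})); split.
- by rewrite (map_inj_uniq phi_inj) enum_uniq.
- move=> z /mapP [[t y] _ ->]; split.
  + move=> j; case: (unliftP ord0 j) => [j'|] ->.
    * rewrite phiS; have := ltn_ord (y j'); rewrite -/m => h.
      rewrite /=; move: (nat_of_ord (y j')) h => a h.
      rewrite ler_norml; apply/andP; split; rewrite /m in h; lia.
    * rewrite ffunE unlift_none /=; have := c_ge0 y; have := c_lt y.
      have := ltn_ord t; rewrite /L => ht.
      have := leq_trunc_div m k; rewrite -/L /m => hL.
      have hkt : (k * t + k <= 2 * M + 1)%N.
        rewrite addnC -mulnS (leq_trans _ hL) // mulnC leq_mul2r.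
        by apply/orP; right; exact: ht.
      move: (c y) (nat_of_ord t) hkt => cy tt hkt h1 h2.
      rewrite ler_norml; apply/andP; split; lia.
  + rewrite /Aset /= big_ord_recl phi0.
    under eq_bigr => j' _ do rewrite phiS.
    have := divz_eq (i%:Z - s y) k%:Z; rewrite -/(c y) => hd.
    set q := ((i%:Z - s y) %/ k%:Z)%Z in hd.
    have -> : (k * t)%:Z + c y - M%:Z + \sum_(i0 < d') ((y i0)%:Z - M%:Z) =
              (t%:Z - q) * k%:Z + i%:Z.
      have hs : s y = - M%:Z + \sum_(j < d') ((y j)%:Z - M%:Z) by [].
      move: hd hs; move: (c y) (s y) (\sum_(j < d') ((y j)%:Z - M%:Z)) => cy sy S hd hs.
      rewrite PoszM; lia.
    by rewrite modzMDl.
- by rewrite size_map -cardT card_prod card_ffun !card_ord subSS subn0.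
Qed.

Lemma pow_ineq d : (2 <= d)%N -> (16 * 5 ^ d <= 7 * 8 ^ d)%N.
Proof.
elim: d => [//|d IH]; rewrite leq_eqVlt => /orP [/eqP <- //|].
rewrite ltnS => /IH h; rewrite !expnS.
have : (16 * (5 * 5 ^ d) <= 16 * (8 * 5 ^ d))%N.
  by rewrite leq_pmul2l // leq_pmul2r ?expn_gt0.
move=> /leq_trans; apply; rewrite mulnCA (mulnCA 7); by rewrite leq_pmul2l.
Qed.

Lemma nat_ineq d k M N' : (2 <= d)%N -> (0 < k)%N -> (4 * k <= M)%N ->
  (4 * N' <= 5 * M)%N ->
  (2 * N' ^ d <= (2 * M + 1) %/ k * (2 * M + 1) ^ (d - 1) * k)%N.
Proof.
move=> d2 kpos kM NM.
set A := ((2 * M + 1) %/ k * k)%N.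
have hA : (7 * M <= 4 * A)%N.
  have := divn_eq (2 * M + 1) k; have := ltn_pmod (2 * M + 1) kpos.
  rewrite -/A; move: ((2 * M + 1) %% k)%N => r; lia.
set X := ((2 * M + 1) ^ (d - 1))%N; set Y := ((2 * M) ^ (d - 1))%N.
have XY : (Y <= X)%N by rewrite leq_exp2r ?subn_gt0 // leq_addr.
have d1 : d = (d - 1).+1 by rewrite subn1 prednK // (leq_trans _ d2).
have e2 : ((2 * M) ^ d = 2 * M * Y)%N by rewrite /Y {1}d1 expnS.
have h1 : (7 * (2 * M) ^ d <= 8 * (A * X))%N.
  rewrite e2; have := leq_mul hA XY; lia.
have h2 : ((4 * N') ^ d <= (5 * M) ^ d)%N.
  by rewrite leq_exp2r // (leq_trans _ d2).
have h3 := pow_ineq d2.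
have Mpos : (0 < M)%N by apply: leq_trans kM; rewrite muln_gt0.
have -> : ((2 * M + 1) %/ k * (2 * M + 1) ^ (d - 1) * k = A * X)%N.
  by rewrite /A mulnAC.
rewrite -(@leq_pmul2l (8 * 4 ^ d)) ?muln_gt0 ?expn_gt0 //.
have E1 : (8 * 4 ^ d * (2 * N' ^ d) = 16 * (4 * N') ^ d)%N.
  by rewrite expnMn; ring.
have E2 : (4 ^ d * (7 * (2 * M) ^ d) = 7 * 8 ^ d * M ^ d)%N.
  by rewrite (_ : 8 = 4 * 2)%N // !expnMn; ring.
rewrite E1; apply: (@leq_trans (16 * (5 * M) ^ d)); first by rewrite leq_pmul2l.
rewrite expnMn mulnA; apply: (@leq_trans (7 * 8 ^ d * M ^ d)).
  by rewrite leq_pmul2r // expn_gt0 Mpos.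
rewrite -E2 (_ : 8 * 4 ^ d * (A * X) = 4 ^ d * (8 * (A * X)))%N; last by ring.
by rewrite leq_pmul2l // expn_gt0.
Qed.

Fixpoint Nseq (N0 j : nat) : nat :=
  match j with 0 => N0 | j'.+1 => Nseq N0 j' + Nseq N0 j' %/ 4 end.

Section Nseq.
Variable N0 : nat.
Hypothesis N08 : (8 <= N0)%N.

Lemma Nseq_ge j : (N0 <= Nseq N0 j)%N.
Proof. elim: j => //= j IH; exact: leq_trans IH (leq_addr _ _). Qed.

Lemma Nseq_lt j : (Nseq N0 j < Nseq N0 j.+1)%N.
Proof.
rewrite /= -{1}(addn0 (Nseq N0 j)) ltn_add2l divn_gt0 //.
exact: leq_trans (leq_trans _ N08) (Nseq_ge j).
Qed.

Lemma Nseq_up j : (4 * Nseq N0 j.+1 <= 5 * Nseq N0 j)%N.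
Proof.
rewrite /=; have := leq_trunc_div (Nseq N0 j) 4.
move: (Nseq N0 j) (Nseq N0 j %/ 4)%N => x q; lia.
Qed.

Lemma Nseq_lo j : (9 * Nseq N0 j <= 8 * Nseq N0 j.+1)%N.
Proof.
rewrite /=; have := divn_eq (Nseq N0 j) 4; have := ltn_pmod (Nseq N0 j) (isT : 0 < 4)%N.
have := leq_trans N08 (Nseq_ge j).
move: (Nseq N0 j) (Nseq N0 j %/ 4)%N (Nseq N0 j %% 4)%N => x q r; lia.
Qed.

Lemma Nseq_mono j j' : (j <= j')%N -> (Nseq N0 j <= Nseq N0 j')%N.
Proof.
elim: j' => [|j' IH]; first by rewrite leqn0 => /eqP ->.
rewrite leq_eqVlt => /orP [/eqP -> //|]; rewrite ltnS => /IH h.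
exact: leq_trans h (ltnW (Nseq_lt j')).
Qed.

Lemma Nseq_gej j : (j <= Nseq N0 j)%N.
Proof.
elim: j => //= j IH; have := Nseq_lt j; rewrite /=; lia.
Qed.

Lemma Nseq_bracket J m : (Nseq N0 J <= m)%N ->
  exists j, [/\ (J <= j)%N, (Nseq N0 j <= m)%N & (m <= Nseq N0 j.+1)%N].
Proof.
move=> hJ.
have exP : exists j, (fun j => Nseq N0 j <= m)%N j by exists J.
have ubP : forall j, (fun j => Nseq N0 j <= m)%N j -> (j <= m)%N.
  by move=> j /= h; exact: leq_trans (Nseq_gej j) h.
case: (ex_maxnP exP ubP) => j /= hj maxj; exists j; split => //.
- exact: maxj.
- rewrite leqNgt; apply/negP => h; have := maxj j.+1 (ltnW h); by rewrite ltnn.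
Qed.

End Nseq.

Section RealLemmas.
Variable R : realType.

Lemma Nseq_pow N0 j : (8 <= N0)%N -> ((9 / 8 : R) ^+ j <= (Nseq N0 j)%:R).
Proof.
move=> N08; elim: j => [|j IH] /=.
  by rewrite expr0 ler1n (leq_trans _ N08).
have h := Nseq_lo N08 j; rewrite /= in h.
have : (9 * Nseq N0 j)%:R <= (8 * (Nseq N0 j + Nseq N0 j %/ 4))%:R :> R by rewrite ler_nat.
rewrite !natrM => h'; rewrite exprS.
apply: (le_trans (ler_wpM2l _ IH)); first by [].
rewrite -(@ler_pM2l _ 8) // mulrA mulrCA divff // mulr1; exact: h'.
Qed.

Lemma psum_inv_sq n : \sum_(j < n) ((j.+1%:R : R) ^+ 2)^-1 <= 2 - 2 / n.+1%:R.
Proof.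
elim: n => [|n IH]; first by rewrite big_ord0 divr1 subrr.
rewrite big_ord_recr /=; apply: (le_trans (lerD IH (lexx _))).
set x : R := n.+1%:R.
have xpos : 0 < x by rewrite ltr0n.
have -> : n.+2%:R = x + 1 by rewrite /x -natr1.
rewrite -subr_ge0.
have -> : 2 - 2 / (x + 1) - (2 - 2 / x + (x ^+ 2)^-1) = (x - 1) / (x ^+ 2 * (x + 1)).
  by field; rewrite ?gt_eqF // ?addr_gt0 // ?exprn_gt0 // ?mulf_neq0 ?gt_eqF ?exprn_gt0 ?addr_gt0.
apply: divr_ge0; first by rewrite subr_ge0 /x ler1n.
by rewrite mulr_ge0 // ?exprn_ge0 ?addr_ge0 // ltW.
Qed.

Lemma series_inv_sq (C : R) : 0 <= C ->
  (\sum_(0 <= j <oo) (C * ((j.+1%:R : R) ^+ 2)^-1)%:E < +oo)%E.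
Proof.
move=> C0; apply: (@le_lt_trans _ _ (C * 2)%:E); last exact: ltry.
apply: lime_le.
  by apply: is_cvg_nneseries => n _ _; rewrite lee_fin mulr_ge0 // invr_ge0 exprn_ge0.
apply: nearW => n; rewrite sumEFin lee_fin big_mkord -mulr_sumr.
rewrite ler_wpM2l //; apply: (le_trans (psum_inv_sq n)).
by rewrite lerBlDr lerDl divr_ge0.
Qed.

End RealLemmas.

Section Main.
Context (R : realType) (d : nat) (hd : (2 <= d)%N)
  (dT : measure_display) (T : measurableType dT) (P : probability T R)
  (mu : probability R R) (w : edge d -> T -> R)
  (hw_meas : forall e, measurable_fun setT (w e))
  (hw_law : forall e B, measurable B -> P (w e @^-1` B) = mu B)
  (hw_indep : mutually_independent P w)
  (g : R -> R)
  (hg_mono : forall u v, 0 < u -> u <= v -> g v <= g u)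
  (k : nat) (hk : (2 <= k)%N) (eps : R) (eps0 : 0 < eps) (nstar : nat)
  (hL : forall n : nat, (nstar <= n)%N ->
     k%:R + eps <= Lambda mu g d n%:R / ln (ln n%:R)).

Definition Eev i n : set T :=
  [set om | forall z, box d n z -> Aset d i k z -> J_at w (g n%:R) z om].

Lemma Eev_meas i n : measurable (Eev i n).
Proof.
have -> : Eev i n =
    \bigcap_(z in [set z | box d n z /\ Aset d i k z]) J_at w (g n%:R) z.
  by apply/seteqP; split => om /= H; [move=> z [] | move=> z bz az]; apply: H.
by apply: cbigcap_meas => z _; exact: J_meas.
Qed.

Lemma limsup_meas (F : nat -> set T) : (forall n, measurable (F n)) ->
  measurable (limsup_ev F).
Proof.
by move=> mF; apply: cbigcap_meas => n _; apply: cbigcup_meas => m _.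
Qed.

Let d_pos : (0 < d)%N. Proof. exact: leq_trans _ hd. Qed.
Let k_pos : (0 < k)%N. Proof. exact: leq_trans _ hk. Qed.

Definition N0 := (nstar + 4 * k + 8)%N.
Let N08 : (8 <= N0)%N. Proof. by rewrite /N0 leq_addl. Qed.

Definition Sj i j : seq (site d) :=
  proj1_sig (cid (exists_S i (Nseq N0 j) d_pos k_pos)).

Definition Fj i j : set T := Xset w (g (Nseq N0 j.+1)%:R) (Sj i j).

Definition Cc : R := ((ln (9 / 8 : R)) ^+ 2)^-1.

Lemma c_gt0 : 0 < ln (9 / 8 : R).
Proof. by apply: ln_gt0; lra. Qed.

Lemma Fj_bound i j : (P (Fj i j) <= (Cc * ((j.+1%:R : R) ^+ 2)^-1)%:E)%E.
Proof.
have [uS hS szS] := proj2_sig (cid (exists_S i (Nseq N0 j) d_pos k_pos)).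
rewrite -/(Sj i j) in uS hS szS.
rewrite /Fj (prE _ (Xset_meas hw_meas _ _)) lee_fin (pr_Xset hw_meas hw_law hw_indep) //; last first.
  move=> z z' zS z'S nz e ez ez'.
  have [_ az] := hS z zS; have [_ az'] := hS z' z'S.
  exact: (far hk az az' nz ez ez').
set M := Nseq N0 j; set N' := Nseq N0 j.+1.
set a := g N'%:R; set q := qa mu a; set r := q ^+ (2 * d); set s := size (Sj i j).
have q0 : 0 <= q by exact: qa_ge0.
have r0 : 0 <= r by rewrite exprn_ge0.
have r1 : r <= 1 by rewrite exprn_ile1 // qa_le1.
have hN' : (nstar <= N')%N.
  apply: (leq_trans _ (Nseq_ge N0 j.+1)); rewrite /N0; lia.
have hLam := hL hN'; rewrite /Lambda -/a -/(qa mu a) -/q -/r in hLam.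
set l := ln (ln (N'%:R : R)) in hLam.
have kpos : 0 < (k%:R : R) by rewrite ltr0n.
have Lam0 : 0 <= N'%:R ^+ d * r :> R by rewrite mulr_ge0 // exprn_ge0.
have l0 : 0 < l.
  rewrite ltNge; apply/negP => hl.
  have : N'%:R ^+ d * r / l <= 0 by rewrite mulr_ge0_le0 // invr_le0.
  move=> /(le_trans hLam); apply/negP; rewrite -ltNge; exact: addr_gt0.
have lnN : 1 < ln (N'%:R : R).
  rewrite ltNge; apply/negP => h; have := ln_le0 h; rewrite -/l leNgt l0 //.
have key : 2 * l <= s%:R * r.
  have h1 : k%:R * l <= N'%:R ^+ d * r.
    rewrite -(ler_pdivlMr _ _ l0); apply: le_trans hLam; rewrite lerDl ltW //.
  have h2 : 2 * N'%:R ^+ d <= s%:R * k%:R :> R.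
    have := nat_ineq hd k_pos (_ : 4 * k <= M)%N (Nseq_up N08 j).
    rewrite /s szS -/M => /(_ _) h.
    have hM : (4 * k <= M)%N.
      apply: (leq_trans _ (Nseq_ge N0 j)); rewrite /N0; lia.
    by move: (h hM); rewrite -(ler_nat R) !natrM natrX.
  nra.
have e1 : (1 - r) ^+ s <= expR (- r) ^+ s.
  apply: lerXn2r; rewrite ?nnegrE ?subr_ge0 ?expR_ge0 //; exact: expR_ge1Dx.
apply: (le_trans e1); rewrite -expRM_natl.
have e2 : expR (s%:R * - r) <= expR (- (2 * l)) by rewrite ler_expR mulrN lerN2.
apply: (le_trans e2).
have lnN0 : 0 < ln (N'%:R : R) by apply: lt_trans lnN.
rewrite expRN expRM_natl /l lnK ?posrE //.
have c0 := c_gt0.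
have hp := Nseq_pow R j.+1 N08; rewrite -/N' in hp.
have hc : ln (9 / 8 : R) * j.+1%:R <= ln (N'%:R : R).
  rewrite mulr_natr -lnXn; last by lra.
  rewrite ler_ln ?posrE //.
  by apply: lt_le_trans hp; rewrite exprn_gt0 //; lra.
rewrite /Cc -invfM -exprMn lef_pV2 ?posrE ?exprn_gt0 ?mulr_gt0 ?ltr0n //.
have hx : 0 <= ln (9 / 8 : R) * j.+1%:R by rewrite mulr_ge0 // ltW.
have hy : 0 <= ln (N'%:R : R) by exact: ltW.
by apply: (lerXn2r 2) hc; rewrite nnegrE.
Qed.


Lemma Cc_ge0 : 0 <= Cc.
Proof. by rewrite /Cc invr_ge0 exprn_ge0 // ltW // c_gt0. Qed.

Lemma part1 i : P (limsup_ev (Eev i)) = 0%E.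
Proof.
have mF j : measurable (Fj i j) by exact: Xset_meas.
have F0 : P (lim_sup_set (Fj i)) = 0%E.
  apply: lim_sup_set_cvg0 => //.
  apply: (le_lt_trans _ (series_inv_sq Cc_ge0)).
  apply: lee_nneseries => [n _ _|n _]; [exact: measure_ge0|exact: Fj_bound].
have sub : limsup_ev (Eev i) `<=` lim_sup_set (Fj i).
  move=> om H J _; case: (H (Nseq N0 J) I) => m /= hm Em.
  have [j [Jj hjm hmj]] := Nseq_bracket N08 hm.
  exists j => //=.
  have [_ hS _] := proj2_sig (cid (exists_S i (Nseq N0 j) d_pos k_pos)).
  rewrite -/(Sj i j) in hS.
  move=> z /= zS; have [bz az] := hS z zS.
  have bzm : box d m z.
    move=> l; apply: le_trans (bz l) _; rewrite lez_nat //.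
  have [e [ez lt]] := Em z bzm az; exists e; split => //.
  apply: le_lt_trans lt; apply: hg_mono; last by rewrite ler_nat.
  rewrite ltr0n; apply: leq_trans hjm; apply: leq_trans (Nseq_ge N0 j).
  exact: leq_trans N08.
apply/eqP; rewrite eq_le measure_ge0 andbT -F0; apply: le_measure; rewrite ?inE //.
- by apply: limsup_meas => n; exact: Eev_meas.
- exact: limsup_meas.
Qed.
End Main.

Section Main2.
Context (R : realType) (d : nat) (hd : (2 <= d)%N)
  (dT : measure_display) (T : measurableType dT) (P : probability T R)
  (mu : probability R R) (w : edge d -> T -> R)
  (hw_meas : forall e, measurable_fun setT (w e))
  (hw_law : forall e B, measurable B -> P (w e @^-1` B) = mu B)
  (hw_indep : mutually_independent P w)
  (g : R -> R)
  (hg_mono : forall u v, 0 < u -> u <= v -> g v <= g u)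
  (k : nat) (hk : (2 <= k)%N) (eps : R) (eps0 : 0 < eps) (nstar : nat)
  (hL : forall n : nat, (nstar <= n)%N ->
     k%:R + eps <= Lambda mu g d n%:R / ln (ln n%:R)).

Lemma Aset_eq (x : site d) i i' : Aset d i k x -> Aset d i' k x -> (i %% k = i' %% k)%N.
Proof.
rewrite /Aset /= => /eqP h1 /eqP h2; move: h1; rewrite h2 !modz_nat => -[] //.
Qed.

Definition Hset n : set T :=
  [set om | exists f : 'I_k -> site d, injective f /\ forall j,
     box d n (f j) /\ pi_at w (f j) om <= 2 * d%:R * g n%:R].

Lemma meas_le (f : T -> R) c : measurable_fun setT f ->
  measurable [set om | f om <= c].
Proof.
move=> mf; have -> : [set om | f om <= c] = f @^-1` `]-oo, c]%classic.
  by apply/seteqP; split => om /=; rewrite in_itv.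
by rewrite -[X in measurable X]setTI; apply: mf => //; exact: measurable_itv.
Qed.

Lemma pi_meas z : measurable_fun setT (pi_at w z).
Proof.
by apply: measurable_sum => i; apply: measurable_realfun.measurable_funD; exact: hw_meas.
Qed.

Lemma Hset_meas n : measurable (Hset n).
Proof.
have -> : Hset n = \bigcup_(f in [set f : {ffun 'I_k -> site d} |
     injective f /\ forall j, box d n (f j)])
     \bigcap_(j in [set: 'I_k]) [set om | pi_at w (f j) om <= 2 * d%:R * g n%:R].
  apply/seteqP; split => om /=.
  - move=> [f [inj H]]; exists (finfun f).
      split; first by move=> x y; rewrite !ffunE; exact: inj.
      by move=> j; rewrite ffunE; have [] := H j.
    by move=> j _; rewrite /= ffunE; have [] := H j.
  - move=> [f [inj hb] H]; exists (fun j => f j); split => // j; split => //.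
    exact: H.
apply: cbigcup_meas => f _; apply: cbigcap_meas => j _.
exact/meas_le/pi_meas.
Qed.

Lemma part2 : P (limsup_ev (fun n => ~` Hset n)) = 0%E.
Proof.
pose U := \bigcup_(i in [set i | (1 <= i <= k)%N]) limsup_ev (Eev w g k i).
have mE i : measurable (limsup_ev (Eev w g k i)).
  by apply: limsup_meas => n; exact: Eev_meas.
have mU : measurable U by apply: cbigcup_meas => i _; exact: mE.
have U0 : P U = 0%E.
  apply/eqP; rewrite eq_le measure_ge0 andbT.
  pose F i := if (1 <= i <= k)%N then limsup_ev (Eev w g k i) else set0.
  have mF i : measurable (F i) by rewrite /F; case: ifP => _ //; exact: mE.
  have sUF : U `<=` \bigcup_n F n.
    by move=> om [i /= ik Li]; exists i => //; rewrite /F ik.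
  apply: (le_trans (measure_sigma_subadditive P mF mU sUF)).
  rewrite eseries0 // => i _ _; rewrite /F; case: ifP => _; last exact: measure0.
  exact: (part1 hd hw_meas hw_law hw_indep hg_mono hk eps0 hL).
have sub : limsup_ev (fun n => ~` Hset n) `<=` U.
  move=> om HG; apply: contrapT => nU.
  have hi : forall i, exists n, (1 <= i <= k)%N ->
      forall m, (n <= m)%N -> ~ Eev w g k i m om.
    move=> i; case: (boolP (1 <= i <= k)%N) => ik; last by exists 0%N.
    have nL : ~ limsup_ev (Eev w g k i) om by move=> L; apply: nU; exists i.
    apply: contrapT => H; apply: nL => n _; apply: contrapT => H2; apply: H.
    by exists n => _ m nm Em; apply: H2; exists m.
  have [nf hnf] := choice hi.
  case: (HG (\max_(i < k.+1) nf i) I) => m /= hm Gm; apply: Gm.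
  have nfm : forall i, (i <= k)%N -> (nf i <= m)%N.
    move=> i ik; apply: leq_trans hm.
    have := @leq_bigmax _ (fun i : 'I_k.+1 => nf i) (Ordinal (ik : (i < k.+1)%N)).
    by [].
  have hz : forall i, exists z, (1 <= i <= k)%N ->
      [/\ box d m z, Aset d i k z & ~ J_at w (g m%:R) z om].
    move=> i; case: (boolP (1 <= i <= k)%N) => ik; last by exists [ffun=> 0].
    have nE := hnf i ik m (nfm i (proj2 (andP ik))).
    apply: contrapT => H; apply: nE => z bz az; apply: contrapT => nJ; apply: H.
    by exists z.
  have [zf hzf] := choice hz.
  have rng : forall j : 'I_k, (1 <= j.+1 <= k)%N by move=> j; rewrite /= ltn_ord.
  exists (fun j : 'I_k => zf j.+1); split.
  - move=> j j' E; have [_ a1 _] := hzf j.+1 (rng j).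
    have [_ a2 _] := hzf j'.+1 (rng j'); rewrite E in a1.
    have := Aset_eq a1 a2; rewrite -[j.+1]addn1 -[j'.+1]addn1 => /eqP.
    rewrite eqn_modDr !modn_small // => /eqP; exact: val_inj.
  - move=> j; have [bz _ nJ] := hzf j.+1 (rng j); split => //.
    set z := zf j.+1; set c := g m%:R.
    have hle : forall e, endpoint z e -> w e om <= c.
      by move=> e ez; rewrite leNgt; apply/negP => lt; apply: nJ; exists e.
    rewrite /pi_at; apply: (@le_trans _ _ (\sum_(i < d) (c + c))).
      apply: ler_sum => i _; apply: lerD; apply: hle; [by left|right].
      by rewrite /= shiftp_comp addNr shiftp0.
    rewrite sumr_const card_ord.
    have -> : (c + c) *+ d = 2 * d%:R * c by rewrite -[LHS]mulr_natr; ring.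
    by [].
apply/eqP; rewrite eq_le measure_ge0 andbT -U0; apply: le_measure; rewrite ?inE //.
apply: limsup_meas => n; exact/measurableC/Hset_meas.
Qed.

End Main2.

Theorem lemma2p5 (R : realType) (d : nat) (hd : (2 <= d)%N)
  (dT : measure_display) (T : measurableType dT) (P : probability T R)
  (mu : probability R R) (w : edge d -> T -> R)
  (hw_meas : forall e, measurable_fun setT (w e))
  (hw_pos : forall e om, 0 < w e om)
  (hw_law : forall e B, measurable B -> P (w e @^-1` B) = mu B)
  (hw_indep : mutually_independent P w)
  (g : R -> R)
  (hg_pos : forall u, 0 < u -> 0 < g u)
  (hg_mono : forall u v, 0 < u -> u <= v -> g v <= g u)
  (hg_lim : g x @[x --> +oo] --> 0)
  (k : nat) (hk : (2 <= k)%N)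
  (hLam : exists2 eps : R, 0 < eps &
          exists nstar : nat, forall n : nat, (nstar <= n)%N ->
            k%:R + eps <= Lambda mu g d n%:R / ln (ln n%:R)) :
  (forall i : nat, (1 <= i <= k)%N ->
     P (limsup_ev (fun n : nat =>
          [set om | forall z, box d n z -> Aset d i k z ->
                      J_at w (g n%:R) z om])) = 0%E)
  /\
  P (limsup_ev (fun n : nat =>
       ~` [set om | exists f : 'I_k -> site d, injective f /\
              forall j, box d n (f j) /\
                        pi_at w (f j) om <= 2 * d%:R * g n%:R])) = 0%E.
Proof.
case: hLam => eps eps0 [nstar hL]; split.
- move=> i _; exact: (part1 hd hw_meas hw_law hw_indep hg_mono hk eps0 hL).
- exact: (part2 hd hw_meas hw_law hw_indep hg_mono hk eps0 hL).
Qed.
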